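(* Let $V$ be a vertex operator algebra of CFT type which is strongly generated by a homogeneous subspace $U\subseteq V_+$. Let $M=\bigoplus_{n\ge0}M(n)$ be an admissible $V$-module such that $M=W+C_1(M)$ for some homogeneous subspace $W\subseteq M$. Then $M$ is spanned by the elements $u^1_{-n_1}\cdots u^r_{-n_r}w$ with $r\ge0$, $n_i\ge1$, $u^i\in U$ and $w\in W$ homogeneous. In particular, $M$ is strongly generated by $W$.
   Context: $V=\bigoplus_{n\ge0}V_n$ is of CFT type if $V_0=\mathbb{C}\mathbf{1}$; $V_+=\bigoplus_{n\ge1}V_n$. $V$ is strongly generated by $U$ if $V$ is spanned by $a^1_{-n_1}\cdots a^r_{-n_r}\mathbf{1}$ with $r\ge0$, $a^i\in U$, $n_i\ge1$ (where $Y(a,z)=\sum_na_nz^{-n-1}$). For the admissible module $M=\bigoplus_{n\ge0}M(n)$, $Y_M(a,z)=\sum_na_nz^{-n-1}$ and $a_nM(m)\subseteq M(m+\mathrm{wt}\,a-n-1)$ for homogeneous $a$; a homogeneous subspace means one spanned by elements lying in the $M(n)$. $C_1(M)$ is the span of $a_{-1}v$ for homogeneous $a\in V_+$ and $v\in M$. $M$ is strongly generated by a subset $W\subseteq M$ if $M$ is spanned by $a^1_{-n_1}\cdots a^k_{-n_k}w$ with $k\ge0$, $a^i\in V_+$ homogeneous, $n_i\ge1$, $w\in W$. *)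

(* Defs.v *)
From HB Require Import structures.
From mathcomp Require Import all_boot all_order all_algebra.
From mathcomp Require Import reals complex.
Set Implicit Arguments.
Unset Strict Implicit.
Unset Printing Implicit Defensive.
Import Order.TTheory GRing.Theory Num.Theory.
Local Open Scope ring_scope.

Section Defs.
Variable K : fieldType.

Definition binz (m : int) (i : nat) : K :=
  (\prod_(j < i) ((m - j%:Z)%:~R : K)) / (i`!)%:R.

Definition spanned (X : lmodType K) (S : X -> Prop) (v : X) : Prop :=
  exists (s : seq X) (c : seq K),
    (forall x, x \in s -> S x) /\
    v = \sum_(i < size s) c`_i *: s`_i.

(* an N-grading X = (+)_{n>=0} X_n, given by the family of projections pi n *)
Definition nat_grading (X : lmodType K) (pi : nat -> X -> X) : Prop :=
  [/\ (forall n a (u v : X), pi n (a *: u + v) = a *: pi n u + pi n v),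
      (forall n m v, pi n (pi m v) = if n == m then pi n v else 0),
      (forall v, exists N, forall n, (N <= n)%N -> pi n v = 0) &
      (forall v N, (forall n, (N <= n)%N -> pi n v = 0) ->
                   v = \sum_(n < N) pi n v)].

Definition homog_of (X : lmodType K) (pi : nat -> X -> X) (n : nat) (v : X) :=
  pi n v = v.
Definition homog (X : lmodType K) (pi : nat -> X -> X) (v : X) :=
  exists n, homog_of pi n v.

Definition subspace (X : lmodType K) (S : X -> Prop) : Prop :=
  S 0 /\ forall a u v, S u -> S v -> S (a *: u + v).

(* homogeneous subspace: spanned by homogeneous elements, equivalently a
   subspace stable under all homogeneous projections *)
Definition homog_subspace (X : lmodType K) (pi : nat -> X -> X)
  (S : X -> Prop) : Prop :=
  subspace S /\ forall n v, S v -> S (pi n v).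

(* modes a_n, with Y(a,z) = sum_n a_n z^{-n-1} *)
Definition bilinear_modes (V X : lmodType K) (Y : V -> int -> X -> X) : Prop :=
  (forall (a b : V) n (x : X) (c : K), Y (c *: a + b) n x = c *: Y a n x + Y b n x) /\
  (forall (a : V) n (x y : X) (c : K), Y a n (c *: x + y) = c *: Y a n x + Y a n y).

Definition truncation (V X : lmodType K) (Y : V -> int -> X -> X) : Prop :=
  forall a x, exists N : int, forall n, N <= n -> Y a n x = 0.

(* Jacobi (Borcherds) identity in components; all sums are finite by
   truncation, so they are taken over i < N for every sufficiently large N *)
Definition jacobi (V X : lmodType K) (YV : V -> int -> V -> V)
  (Y : V -> int -> X -> X) : Prop :=
  forall (a b : V) (x : X) (m n k : int), exists N0 : nat, forall N : nat,
    (N0 <= N)%N ->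
    \sum_(i < N) binz m i *: Y (YV a (k + i%:Z) b) (m + n - i%:Z) x =
    \sum_(i < N) (((-1) ^+ i * binz k i) *:
                   (Y a (m + k - i%:Z) (Y b (n + i%:Z) x)
                    - ((-1) ^ k) *: Y b (n + k - i%:Z) (Y a (m + i%:Z) x))).

Definition is_VOA (V : lmodType K) (Y : V -> int -> V -> V) (pi : nat -> V -> V)
  (vac omega : V) (c : K) : Prop :=
  let L := fun (n : int) (v : V) => Y omega (n + 1) v in
  [/\ nat_grading pi /\
      (forall n, exists s : seq V, forall v, homog_of pi n v ->
          spanned (fun x => x \in s) v),
      bilinear_modes Y /\ truncation Y,
      (forall n v, Y vac n v = if n == -1 then v else 0) /\
      ((forall a n, 0 <= n -> Y a n vac = 0) /\ (forall a, Y a (-1) vac = a)),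
      jacobi Y Y &
      [/\ homog_of pi 2 omega,
          (forall (m n : int) v, L m (L n v) - L n (L m v) =
              (m - n)%:~R *: L (m + n) v +
              (if m + n == 0 then ((m ^+ 3 - m)%:~R / 12%:R * c) *: v else 0)),
          (forall n v, homog_of pi n v -> L 0 v = n%:R *: v) &
          (forall a n v, Y (L (-1) a) n v = - (n%:~R *: Y a (n - 1) v))]].

Definition cft_type (V : lmodType K) (pi : nat -> V -> V) (vac : V) : Prop :=
  forall v, homog_of pi 0 v <-> exists a : K, v = a *: vac.

Definition in_Vplus (V : lmodType K) (pi : nat -> V -> V) (v : V) : Prop :=
  pi 0 v = 0.

(* admissible V-module (Dong-Li-Mason): weak module with an N-grading
   compatible with the modes:  a_n M(m) <= M(m + wt a - n - 1) *)
Definition is_admissible (V : lmodType K) (Y : V -> int -> V -> V)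
  (pi : nat -> V -> V) (vac : V) (M : lmodType K) (YM : V -> int -> M -> M)
  (piM : nat -> M -> M) : Prop :=
  [/\ bilinear_modes YM /\ truncation YM,
      (forall n w, YM vac n w = if n == -1 then w else 0),
      jacobi Y YM, nat_grading piM &
      (forall a k w m n, homog_of pi k a -> homog_of piM m w ->
         let d := m%:Z + k%:Z - n - 1 in
         YM a n w = if 0 <= d then piM `|d|%N (YM a n w) else 0)].

(* a^1_{-n_1} ... a^r_{-n_r} x  with a^i in S, n_i >= 1 *)
Definition monomial (V X : lmodType K) (Y : V -> int -> X -> X)
  (S : V -> Prop) (x v : X) : Prop :=
  exists l : seq (V * nat),
    (forall p, p \in l -> S p.1 /\ (1 <= p.2)%N) /\
    v = foldr (fun p y => Y p.1 (- (p.2%:Z)) y) x l.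

Definition strongly_generated_by (V X : lmodType K) (Y : V -> int -> X -> X)
  (S : V -> Prop) (T : X -> Prop) : Prop :=
  forall v : X, spanned (fun y => exists x, T x /\ monomial Y S x y) v.

Definition C1 (V : lmodType K) (pi : nat -> V -> V) (M : lmodType K)
  (YM : V -> int -> M -> M) (v : M) : Prop :=
  spanned (fun y => exists a w, homog pi a /\ in_Vplus pi a /\ y = YM a (-1) w) v.

End Defs.

(* Main.v *)
Require Import Defs.
From HB Require Import structures.
From mathcomp Require Import all_boot all_order all_algebra.
From mathcomp Require Import reals complex.
From mathcomp Require Import zify.
Import Order.TTheory GRing.Theory Num.Theory.
Local Open Scope ring_scope.

Lemma sum_closed (K : fieldType) (X : lmodType K) (T : X -> Prop) (N : nat) (F : 'I_N -> X) :
  T 0 -> (forall a u v, T u -> T v -> T (a *: u + v)) ->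
  (forall i, T (F i)) -> T (\sum_(i < N) F i).
Proof.
move=> T0 TD TF; apply: (big_ind T) => //.
  by move=> u v Tu Tv; have := TD 1 u v Tu Tv; rewrite scale1r.
Qed.

Lemma span_closed (K : fieldType) (X : lmodType K) (P T : X -> Prop) :
  T 0 -> (forall a u v, T u -> T v -> T (a *: u + v)) ->
  (forall x, P x -> T x) -> forall v, spanned P v -> T v.
Proof.
move=> T0 TD TP v [s [c [Hs ->]]]; apply: sum_closed => // i.
have := TD c`_i s`_i 0 (TP _ (Hs _ (mem_nth 0 (ltn_ord i)))) T0.
by rewrite addr0.
Qed.

Lemma span0 (K : fieldType) (X : lmodType K) (P : X -> Prop) : spanned P 0.
Proof. by exists [::], [::]; split; [move=> x; rewrite in_nil | rewrite big_ord0]. Qed.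

Lemma span1 (K : fieldType) (X : lmodType K) (P : X -> Prop) x : P x -> spanned P x.
Proof.
move=> Px; exists [:: x], [:: 1]; split; first by move=> y; rewrite inE => /eqP ->.
by rewrite big_ord1 /= scale1r.
Qed.

Lemma spanD (K : fieldType) (X : lmodType K) (P : X -> Prop) a u v :
  spanned P u -> spanned P v -> spanned P (a *: u + v).
Proof.
move=> [s1 [c1 [H1 ->]]] [s2 [c2 [H2 ->]]].
exists (s1 ++ s2), (mkseq (fun i => a * c1`_i) (size s1) ++ c2); split.
  by move=> x; rewrite mem_cat => /orP [/H1|/H2].
set cc := _ ++ c2.
rewrite -(big_mkord xpredT (fun i => cc`_i *: (s1 ++ s2)`_i)) size_cat (big_cat_nat _ (leq_addr _ _)) //=.
rewrite scaler_sumr; congr (_ + _).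
  rewrite -(big_mkord xpredT (fun i => a *: (c1`_i *: s1`_i))) [RHS]big_nat_cond [LHS]big_nat_cond.
  apply: eq_bigr => i /andP [/andP [_ Hi] _].
  by rewrite nth_cat nth_cat size_mkseq Hi nth_mkseq // scalerA.
rewrite -{1}(add0n (size s1)) big_addn -(big_mkord xpredT (fun i => c2`_i *: s2`_i)).
rewrite addKn; apply: eq_bigr => i _.
by rewrite /cc !nth_cat size_mkseq ltnNge leq_addl /= addnK.
Qed.

Lemma lin0 (K : fieldType) (X Z : lmodType K) (f : X -> Z) :
  (forall a u v, f (a *: u + v) = a *: f u + f v) -> f 0 = 0.
Proof.
move=> H; have := H 1 0 0; rewrite !scale1r addr0 => e.
have := congr1 (fun t => t - f 0) e; rewrite /= addrK subrr => <-. by [].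
Qed.

Lemma linD (K : fieldType) (X Z : lmodType K) (f : X -> Z) :
  (forall a u v, f (a *: u + v) = a *: f u + f v) -> forall u v, f (u + v) = f u + f v.
Proof. by move=> H u v; have := H 1 u v; rewrite !scale1r. Qed.

Lemma linZ (K : fieldType) (X Z : lmodType K) (f : X -> Z) :
  (forall a u v, f (a *: u + v) = a *: f u + f v) -> forall a u, f (a *: u) = a *: f u.
Proof. by move=> H a u; have := H a u 0; rewrite !addr0 (@lin0 _ _ _ f H) addr0. Qed.

Lemma linS (K : fieldType) (X Z : lmodType K) (f : X -> Z) :
  (forall a u v, f (a *: u + v) = a *: f u + f v) ->
  forall N (F : 'I_N -> X), f (\sum_(i < N) F i) = \sum_(i < N) f (F i).
Proof.
move=> H N F; elim/big_rec2: _; first exact: (@lin0 _ _ _ f H).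
by move=> i y1 y2 _ <-; rewrite (@linD _ _ _ f H).
Qed.

Lemma linB (K : fieldType) (X Z : lmodType K) (f : X -> Z) :
  (forall a u v, f (a *: u + v) = a *: f u + f v) -> forall u v, f (u - v) = f u - f v.
Proof.
move=> H u v; have := H (-1) v u; rewrite !scaleN1r => e.
by rewrite [u - v]addrC e addrC.
Qed.

Lemma span_mono (K : fieldType) (X : lmodType K) (P Q : X -> Prop) v :
  (forall x, P x -> Q x) -> spanned P v -> spanned Q v.
Proof. by move=> PQ [s [c [Hs ->]]]; exists s, c; split => // x /Hs /PQ. Qed.
Theorem proposition4p2 (R : realType)
  (V : lmodType R[i]) (Y : V -> int -> V -> V) (pi : nat -> V -> V)
  (vac omega : V) (c : R[i])
  (HV : is_VOA Y pi vac omega c) (Hcft : cft_type pi vac)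
  (U : V -> Prop) (HU : homog_subspace pi U) (HUplus : forall u, U u -> in_Vplus pi u)
  (HsgU : strongly_generated_by Y U (fun x => x = vac))
  (M : lmodType R[i]) (YM : V -> int -> M -> M) (piM : nat -> M -> M)
  (HM : is_admissible Y pi vac YM piM)
  (W : M -> Prop) (HW : homog_subspace piM W)
  (HMW : forall v : M, exists w c1, W w /\ C1 pi YM c1 /\ v = w + c1) :
  strongly_generated_by YM (fun u => U u /\ homog pi u)
      (fun w => W w /\ homog piM w) /\
  strongly_generated_by YM (fun a => homog pi a /\ in_Vplus pi a) W.
Proof.
case: HV => [[HgrV _] [[Ylin1 Ylin2] _] _ _ _].
case: HgrV => [pilin piidem pifin pisum].
case: HM => [[[YMlin1 YMlin2] _] Hvac Hjac HgrM Hdeg].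
case: HgrM => [Mlin Midem Mfin Msum].
case: HU => [[U0 UD] Upi].
case: HW => [[W0 WD] Wpi].
set S := fun v : M => spanned (fun y => exists x, (W x /\ homog piM x) /\
           monomial YM (fun u => U u /\ homog pi u) x y) v.
have S0 : S 0 by apply: span0.
have SD : forall a u v, S u -> S v -> S (a *: u + v) by move=> a u v; apply: spanD.
have Ssum : forall N (F : 'I_N -> M), (forall i, S (F i)) -> S (\sum_(i<N) F i).
  by move=> N F; apply: sum_closed.
have SZ : forall a v, S v -> S (a *: v).
  by move=> a v hv; have := SD a v 0 hv S0; rewrite addr0.
have SB : forall u v, S u -> S v -> S (u - v).
  by move=> u v hu hv; have := SD (-1) v u hv hu; rewrite scaleN1r addrC.
have Mdec : forall v, exists N, v = \sum_(m < N) piM m v.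
  by move=> v; have [N HN] := Mfin v; exists N; apply: Msum.
have Vdec : forall v, exists N, v = \sum_(m < N) pi m v.
  by move=> v; have [N HN] := pifin v; exists N; apply: pisum.
have Mproj : forall D e y, homog_of piM e y -> piM D y = if D == e then y else 0.
  move=> D e y hy; rewrite -hy Midem; case: eqP => [->|] //; by rewrite hy.
have Mhom : forall m z, homog_of piM m (piM m z).
  by move=> m z; rewrite /homog_of Midem eqxx.
have YMl2 : forall a j, forall c x y, YM a j (c *: x + y) = c *: YM a j x + YM a j y.
  by move=> a j cc x y; apply: YMlin2.
have YMl1 : forall j x, forall c a b, YM (c *: a + b) j x = c *: YM a j x + YM b j x.
  by move=> j x cc a b; apply: YMlin1.
have Yl1 : forall j x, forall c a b, Y (c *: a + b) j x = c *: Y a j x + Y b j x.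
  by move=> j x cc a b; apply: Ylin1.
have Cons : forall u (j : int) s, U u -> homog pi u -> j <= -1 -> S s -> S (YM u j s).
  move=> u j s hu hh hj; apply: (@span_closed _ _ _ (fun s => S (YM u j s))).
  - by rewrite (@lin0 _ _ _ _ (YMl2 u j)).
  - by move=> a v1 v2 h1 h2; rewrite YMl2; apply: SD.
  - move=> y [x [hx [l [hl ->]]]]; apply: span1; exists x; split => //.
    exists ((u, absz j) :: l); split.
      move=> p; rewrite inE => /orP [/eqP -> | /hl] //=; split => //; lia.
    rewrite /=; congr (YM _ _ _); lia.
have Q : forall n x, homog_of piM n x -> S x.
elim/ltn_ind => n IH x hx.
have IHs : forall m z, (m < n)%N -> S (piM m z).
  by move=> m z lt; apply: (IH m lt).
pose P a := forall (j : int) (x : M) (d D : nat), j <= -1 -> homog_of piM d x ->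
   (D <= n)%N -> ((d < n)%N \/ j <= -2) -> S (piM D (YM a j x)).
have P0 : P 0.
  move=> j y d D _ _ _ _.
  by rewrite (@lin0 _ _ _ (fun a => YM a j y) (YMl1 j y)) (@lin0 _ _ _ _ (Mlin D)).
have PD : forall c a b, P a -> P b -> P (c *: a + b).
  by move=> c0 a b Pa Pb j y d D h1 h2 h3 h4; rewrite YMl1 Mlin; apply: SD;
    [apply: (Pa j y d D) | apply: (Pb j y d D)].
have Pvac : P vac.
  move=> j y d D hj hy hD hor; rewrite Hvac; case: eqP => [ej|_].
    have dn : (d < n)%N by case: hor => //; lia.
    rewrite (Mproj D d y hy); case: eqP => _ //; exact: (IH d dn y hy).
  by rewrite (@lin0 _ _ _ _ (Mlin D)).
have FT : forall u w (j : int) z D, U u -> homog_of pi w u -> (1 <= w)%N -> j <= -1 ->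
    (D <= n)%N -> S (piM D (YM u j z)).
  move=> u w j z D hu hw w1 hj hD.
  have [N ->] := Mdec z.
  rewrite (@linS _ _ _ _ (YMl2 u j)) (@linS _ _ _ _ (Mlin D)).
  apply: Ssum => m.
  move: (Hdeg u w (piM m z) m j hw (Mhom m z)) => /=.
  case: ifP => [hd eX | _ ->]; last by rewrite (@lin0 _ _ _ _ (Mlin D)).
  rewrite (Mproj D _ _ (esym eX)); case: eqP => [eD|_] //.
  apply: Cons => //; first by exists w.
  apply: IHs; lia.
have Core : forall u w (k : nat) b, U u -> homog_of pi w u -> (1 <= w)%N -> (1 <= k)%N ->
    P b -> P (Y u (- k%:Z) b).
  move=> u w k b hu hw w1 k1 Pb j y d D hj hy hD hor.
  have [N0 HJ] := Hjac u b y 0 j (- k%:Z).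
  have := HJ N0.+1 (leqnSn N0).
  rewrite big_ord_recl big1 => [|i _]; last first.
    by rewrite /binz big_ord_recl /= subrr mul0r mul0r scale0r.
  rewrite /binz big_ord0 fact0 div1r invr1 scale1r /= addr0 subr0 add0r addr0 => ->.
  rewrite (@linS _ _ _ _ (Mlin D)); apply: Ssum => i.
  rewrite (@linZ _ _ _ _ (Mlin D)) (@linB _ _ _ _ (Mlin D)) (@linZ _ _ _ _ (Mlin D)).
  apply SZ; apply SB; last apply SZ.
    by apply: (FT u w) => //; lia.
  move: (Hdeg u w y d (0 + i%:Z) hw hy) => /=.
  case: ifP => [hd eY | _ ->]; last first.
    by rewrite (@lin0 _ _ _ _ (YMl2 b _)) (@lin0 _ _ _ _ (Mlin D)).
  apply: (Pb _ _ (absz (d%:Z + w%:Z - (0 + i%:Z) - 1)%R) D) => //; try lia.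
have Pall : forall a, P a.
  move=> a; apply: (@span_closed _ _ _ P P0 PD _ a (HsgU a)).
  move=> y [x0 [-> [l [hl ->]]]].
  elim: l hl => [|[u k] l IHl] hl /=; first exact: Pvac.
  have [hu k1] := hl (u, k) (mem_head _ _).
  have Pb : P (foldr (fun p y => Y p.1 (- p.2%:Z) y) vac l).
    by apply: IHl => p hp; apply: hl; rewrite inE hp orbT.
  have [Nu eu] := Vdec u; rewrite /= in hu k1; rewrite eu.
  rewrite (@linS _ _ _ (fun a => Y a (- k%:Z) _) (Yl1 _ _)).
  apply: sum_closed => // m.
  case: (posnP m) => [m0 | mpos].
    rewrite m0 (HUplus u hu) (@lin0 _ _ _ (fun a => Y a _ _) (Yl1 _ _)); exact: P0.
  apply: (Core _ m) => //; first exact: Upi.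
  by rewrite /homog_of piidem eqxx.
have [w [c1 [hw [hc ex]]]] := HMW x.
rewrite -hx ex; have := Mlin n 1 w c1; rewrite !scale1r => ->.
have := SD 1 (piM n w) (piM n c1); rewrite scale1r; apply.
  apply: span1; exists (piM n w); split; first by split; [exact: Wpi | exists n].
  by exists [::].
move: hc; apply: (@span_closed _ _ _ (fun v => S (piM n v))).
- by rewrite (@lin0 _ _ _ _ (Mlin n)).
- by move=> a v1 v2 h1 h2; rewrite Mlin; apply: SD.
move=> y [a [m [[ka hka] [hplus ->]]]].
case: (posnP ka) => [ka0 | kapos].
  have a0 : a = 0 by rewrite -hka ka0 hplus.
  by rewrite a0 (@lin0 _ _ _ (fun a => YM a _ _) (YMl1 _ _)) (@lin0 _ _ _ _ (Mlin n)).
have [N ->] := Mdec m.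
rewrite (@linS _ _ _ _ (YMl2 a _)) (@linS _ _ _ _ (Mlin n)).
apply: Ssum => d.
case: (ltnP d n) => hdn.
  by apply: (Pall a (-1) (piM d m) d n) => //; left.
move: (Hdeg a ka (piM d m) d (-1) hka (Mhom d m)) => /=.
case: ifP => [hd e | _ ->]; last by rewrite (@lin0 _ _ _ _ (Mlin n)).
rewrite (Mproj n _ _ (esym e)); case: eqP => [eN|_] //.
lia.
have Sall : forall v, S v.
  move=> v; have [N ->] := Mdec v; apply: Ssum => m; exact: (Q m).
split; first by move=> v; exact: Sall.
move=> v; apply: span_mono (Sall v).
move=> y [x [[hx _] [l [hl e]]]]; exists x; split => //; exists l; split => //.
by move=> p /hl [[hu hh] h2]; split => //; split => //; exact: HUplus.
Qed.
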